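(* Let $(X_1,X_2)$ be a preliminary and a primary test statistic for one-sided hypotheses, with (continuous, strictly increasing) marginal CDFs $F_{0;X_1}$ and $F_{0;X_2}$ under the true null. Assume the classical errors-in-variables model $\widetilde X_1=X_1+\eta$, where $\eta$ is independent of $(X_1,X_2)$, and the probability density function of $X_1$ under the true null and the probability density function of $\eta$ are both symmetric with respect to $0$. Set $(p_1,p_2)=(F_{0;X_1}(X_1),F_{0;X_2}(X_2))$ and $\tilde p_1=F_{0;X_1}(\widetilde X_1)$ for left-sided hypotheses, or $(p_1,p_2)=(1-F_{0;X_1}(X_1),1-F_{0;X_2}(X_2))$ and $\tilde p_1=1-F_{0;X_1}(\widetilde X_1)$ for right-sided hypotheses. If the joint probability density function of $(p_1,p_2)$ under the true null is centrally symmetric with respect to $(1/2,1/2)$, i.e. $f_0(p_1,p_2)=f_0(1-p_1,1-p_2)$, then the joint probability density function of $(\tilde p_1,p_2)$ under the true null is also centrally symmetric with respect to $(1/2,1/2)$. *)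

(* Defs.v *)
From HB Require Import structures.
From mathcomp Require Import all_boot all_order all_algebra.
From mathcomp Require Import all_classical all_reals all_analysis.
Set Implicit Arguments. Unset Strict Implicit. Unset Printing Implicit Defensive.
Import Order.TTheory GRing.Theory Num.Theory.
Import numFieldNormedType.Exports.
Local Open Scope classical_set_scope.
Local Open Scope ring_scope.

Definition is_pdf d (T : measurableType d) (R : realType) (P : probability T R)
  dV (V : measurableType dV) (mu : set V -> \bar R) (Y : T -> V) (f : V -> R) :=
  [/\ (forall v, 0 <= f v), measurable_fun setT f &
      forall A, measurable A ->
        P (Y @^-1` A) = (\int[mu]_(v in A) (f v)%:E)%E].

Definition is_pdf1 d (T : measurableType d) (R : realType) (P : probability T R)
  (Y : T -> R) (f : R -> R) :=
  is_pdf P (@lebesgue_measure R) Y f.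

Definition is_pdf2 d (T : measurableType d) (R : realType) (P : probability T R)
  (Y : T -> R * R) (f : R * R -> R) :=
  is_pdf P ((@lebesgue_measure R) \x (@lebesgue_measure R))%E Y f.

Definition symmetric0 (R : realType) (g : R -> R) := forall x, g (- x) = g x.

Definition centrally_symmetric (R : realType) (f : R * R -> R) :=
  forall p1 p2, f (p1, p2) = f (1 - p1, 1 - p2).

Definition rcdf d (T : measurableType d) (R : realType) (P : probability T R)
  (X : {RV P >-> R}) (x : R) : R := fine (cdf X x).

Definition indep_RV_pair d (T : measurableType d) (R : realType)
  (P : probability T R) (eta : T -> R) (Y : T -> R * R) :=
  forall (A : set R) (B : set (R * R)), measurable A -> measurable B ->
    P (eta @^-1` A `&` Y @^-1` B) = (P (eta @^-1` A) * P (Y @^-1` B))%E.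

Definition pval (R : realType) (left_sided : bool) (F : R -> R) (x : R) : R :=
  if left_sided then F x else 1 - F x.

(* Main.v *)
Require Import Defs.
From HB Require Import structures.
From mathcomp Require Import all_boot all_order all_algebra.
From mathcomp Require Import all_classical all_reals all_analysis.
From mathcomp Require Import measurable_realfun ring lra.
Import Order.TTheory GRing.Theory Num.Theory.
Import numFieldNormedType.Exports.
Local Open Scope classical_set_scope.
Local Open Scope ring_scope.
Definition pfm d1 d2 (T1 : measurableType d1) (T2 : measurableType d2) (R : realType)
  (m : {measure set T1 -> \bar R}) (f : T1 -> T2) (mf : measurable_fun setT f) :
  {measure set T2 -> \bar R}.
Proof. refine (pushforward m f : {measure set _ -> \bar R}). exact: mf. Defined.
Arguments pfm {d1 d2 T1 T2 R} m {f} mf.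

Lemma pfmE d1 d2 (T1 : measurableType d1) (T2 : measurableType d2) (R : realType)
  (m : {measure set T1 -> \bar R}) (f : T1 -> T2) (mf : measurable_fun setT f) A :
  pfm m mf A = m (f @^-1` A).
Proof. by []. Qed.
Arguments pfmE {d1 d2 T1 T2 R} m {f} mf A.

Section H.
Context {R : realType}.
Local Notation mu := (@lebesgue_measure R).
Local Notation mR := (measurableTypeR R).

Lemma int_neg (g : R -> R) : (forall x, 0 <= g x) -> measurable_fun setT g ->
  symmetric0 g -> forall D : set R, measurable D ->
  (\int[mu]_(x in -%R @^-1` D) (g x)%:E = \int[mu]_(x in D) (g x)%:E)%E.
Proof.
move=> g0 mg sg D mD.
transitivity (\int[pushforward mu (-%R : _ -> measurableTypeR R)]_(x in D) (g x)%:E)%E; last first.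
  apply: eq_measure_integral => A mA _. exact: (lebesgue_measureN mA).
rewrite ge0_integral_pushforward //.
- by apply: eq_integral => x _ /=; rewrite sg.
- by apply/measurable_EFinP; exact: measurable_funS mg.
- by move=> y _; rewrite lee_fin.
Qed.

Lemma mrefl1 : measurable_fun setT (fun x : mR => 1 - x).
Proof. by apply: measurable_funB => //; exact: measurable_cst. Qed.

Lemma refl1_preimage (a b : R) :
  (fun x : R => 1 - x) @^-1` `]a, b]%classic = `[1 - b, 1 - a[%classic.
Proof.
apply/seteqP; split => x /=; rewrite !in_itv /= => /andP[h1 h2]; apply/andP; split; lra.
Qed.

Lemma lebesgue_refl1 (A : set mR) : measurable A ->
  pushforward mu (fun x : mR => 1 - x) A = mu A.
Proof.
move=> mA; pose mm := (@pfm _ _ (measurableTypeR R) (measurableTypeR R) R mu (fun x => 1 - x) mrefl1).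
change (mm A = mu A); apply/esym; apply: (@lebesgue_measure_unique R mm) => //= _ [[a b]] _ <-.
rewrite /mm pfmE /=.
set S := (_ @^-1` _); have -> : S = `[1 - b, 1 - a[%classic by exact: refl1_preimage.
rewrite !lebesgue_measure_itv /= !lte_fin.
have -> : (1 - b < 1 - a) = (a < b) by apply/idP/idP => h; lra.
case: ifP => // _; rewrite -EFinB; congr (_%:E); lra.
exact: mrefl1.
Qed.

Local Notation Leb2 := ((@lebesgue_measure R) \x (@lebesgue_measure R))%E.
Definition refl2 (p : mR * mR) : mR * mR := (1 - p.1, 1 - p.2).

Lemma mrefl2 : measurable_fun setT refl2.
Proof.
apply: measurable_fun_pair.
- exact: (measurableT_comp mrefl1 measurable_fst).
- exact: (measurableT_comp mrefl1 measurable_snd).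
Qed.

Lemma refl2K : cancel refl2 refl2.
Proof. by case=> x y; rewrite /refl2 /= !subKr. Qed.

Lemma leb2_refl (A : set (mR * mR)) : measurable A -> Leb2 (refl2 @^-1` A) = Leb2 A.
Proof.
move=> mA; change (pfm Leb2 mrefl2 A = Leb2 A); apply/esym.
apply: product_measure_unique => // B C mB mC.
rewrite pfmE.
have -> : refl2 @^-1` (B `*` C) = ((fun x : mR => 1 - x) @^-1` B) `*` ((fun x : mR => 1 - x) @^-1` C).
  by apply/seteqP; split => -[x y].
have m1B : measurable ((fun x : mR => 1 - x) @^-1` B).
  by rewrite -[X in measurable X]setTI; exact: mrefl1.
have m1C : measurable ((fun x : mR => 1 - x) @^-1` C).
  by rewrite -[X in measurable X]setTI; exact: mrefl1.
apply: (etrans (product_measure1E lebesgue_measure lebesgue_measure m1B m1C)).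
by congr (_ * _)%E; [exact: (lebesgue_refl1 B mB)|exact: (lebesgue_refl1 C mC)].
Qed.

Lemma refl2_pre2 (A : set (mR * mR)) : refl2 @^-1` (refl2 @^-1` A) = A.
Proof. by apply/seteqP; split => x /=; rewrite refl2K. Qed.

Lemma int_refl2 (f : mR * mR -> R) : (forall x, 0 <= f x) -> measurable_fun setT f ->
  forall A, measurable A ->
  (\int[Leb2]_(x in refl2 @^-1` A) (f x)%:E = \int[Leb2]_(x in A) (f (refl2 x))%:E)%E.
Proof.
move=> f0 mf A mA.
have mrA : measurable (refl2 @^-1` A).
  by rewrite -[X in measurable X]setTI; exact: mrefl2.
transitivity (\int[pfm Leb2 mrefl2]_(x in refl2 @^-1` A) (f x)%:E)%E.
  by apply: eq_measure_integral => B mB _; rewrite pfmE; apply/esym; exact: leb2_refl.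
apply: (etrans (ge0_integral_pushforward mrefl2 Leb2 mrA _ _)).
- by apply/measurable_EFinP; exact: measurable_funS mf.
- by move=> y _; rewrite lee_fin.
- by rewrite refl2_pre2.
Qed.
End H.

Section L.
Context d (T : measurableType d) (R : realType) (P : probability T R).
Local Notation mR := (measurableTypeR R).

Lemma sym_law1 (X : T -> R) (g : R -> R) : is_pdf1 P X g -> symmetric0 g ->
  forall A : set R, measurable A -> P (X @^-1` (-%R @^-1` A)) = P (X @^-1` A).
Proof.
move=> [g0 mg H] sg A mA.
have mNA : measurable (-%R @^-1` A : set R).
  by rewrite -[X in measurable X]setTI; exact: measurable_realfun.oppr_measurable.
by rewrite (H _ mNA) (H _ mA) int_neg.
Qed.

Lemma sym_law2 (Y : T -> mR * mR) (f0 : mR * mR -> R) : is_pdf2 P Y f0 ->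
  centrally_symmetric f0 ->
  forall A : set (mR * mR), measurable A -> P (Y @^-1` (refl2 @^-1` A)) = P (Y @^-1` A).
Proof.
move=> [f00 mf0 H] sf A mA.
have mrA : measurable (refl2 @^-1` A).
  by rewrite -[X in measurable X]setTI; exact: mrefl2.
rewrite (H _ mrA) (H _ mA) int_refl2 //.
by apply: eq_integral => -[a b] _; rewrite /refl2 /= -sf.
Qed.

Lemma Pfin (A : set T) : measurable A -> P A \is a fin_num.
Proof. by move=> mA; exact: fin_num_measure. Qed.

Lemma cdf_sym (X : {RV P >-> R}) (g : R -> R) : is_pdf1 P X g -> symmetric0 g ->
  forall x, rcdf X (- x) = 1 - rcdf X x.
Proof.
move=> pg sg x; have [g0 mg H] := pg.
rewrite /rcdf /cdf /distribution /pushforward.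
have e1 : P (X @^-1` `]-oo, - x]) = P (X @^-1` `[x, +oo[).
  rewrite -[RHS](@sym_law1 X g pg sg); last exact: measurable_itv.
  by rewrite opp_preimage_itvbndy.
have e2 : P (X @^-1` `]-oo, x[) = P (X @^-1` `]-oo, x]).
  rewrite (H _ (measurable_itv _)) (H _ (measurable_itv _)) integral_itv_bndo_bndc //.
  by apply/measurable_EFinP; exact: measurable_funS mg.
have e3 : X @^-1` `[x, +oo[ = ~` (X @^-1` `]-oo, x[).
  apply/seteqP; split => t /=; rewrite !in_itv /= ?andbT.
  - by rewrite leNgt => /negP.
  - by move=> /negP; rewrite -leNgt.
rewrite e1 e3 probability_setC; last exact: measurable_funPTI (measurable_itv _).
rewrite e2 fineB //; last exact: Pfin (measurable_funPTI _ (measurable_itv _)).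
Qed.
End L.

Section PRE.
Context {R : realType}.
Local Notation mR := (measurableTypeR R).
Variable pv : mR -> mR.
Hypothesis hJ : forall a : R, exists2 J : set mR, measurable J & forall x, (x < a) <-> J (pv x).

Lemma pre_all (A : set mR) : measurable A -> preimage_set_system setT pv measurable A.
Proof.
move=> mA.
have E := measurable_realfun.RGenInftyO.measurableE R.
have mA' : (measurable_realfun.RGenInftyO.G (R:=R)).-sigma.-measurable A.
  by rewrite -E.
apply: (smallest_sub _ _ mA').
  exact: sigma_algebra_preimage (sigma_algebra_measurable _).
move=> _ [a ->]; have [J mJ hJa] := hJ a.
exists J => //; apply/seteqP; split => x /=.
  by move=> [_ /hJa]; rewrite in_itv /=.
by rewrite in_itv /= => /hJa.
Qed.

Definition pii (p : mR * mR) : mR * mR := (pv p.1, p.2).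

Lemma pre_prod (S : set (mR * mR)) : measurable S -> preimage_set_system setT pii measurable S.
Proof.
move=> mS.
have mS' : <<s [set A `*` B | A in (@measurable _ mR) & B in (@measurable _ mR)] >> S.
  by rewrite -measurable_prod_measurableType.
apply: (smallest_sub _ _ mS').
  exact: sigma_algebra_preimage (sigma_algebra_measurable _).
move=> _ [A mA] [B mB] <-.
have [U mU hU] := pre_all A mA.
exists (U `*` B); first exact: measurableX.
rewrite -hU; apply/seteqP; split => -[x y] /=; rewrite /pii /=; tauto.
Qed.
End PRE.

Section PV.
Context {R : realType}.
Local Notation mR := (measurableTypeR R).

Lemma lt_iff (F : R -> R) : {homo F : x y / x < y} -> forall x a, (F x < F a) = (x < a).
Proof.
move=> hF x a; apply/idP/idP; last exact: hF.
move=> h; rewrite ltNge; apply/negP; rewrite le_eqVlt => /orP[/eqP e|/hF h'].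
  by rewrite e ltxx in h.
by have := lt_trans h h'; rewrite ltxx.
Qed.

Lemma hJ_pval (F : R -> R) (b : bool) : {homo F : x y / x < y} ->
  forall a : R, exists2 J : set mR, measurable J & forall x, (x < a) <-> J (pval b F x).
Proof.
move=> hF a; case: b; rewrite /pval.
- exists `]-oo, F a[%classic; first exact: measurable_itv.
  by move=> x; rewrite /= in_itv /= lt_iff.
- exists `]1 - F a, +oo[%classic; first exact: measurable_itv.
  move=> x; rewrite /= in_itv /= andbT ltrD2l ltrN2 lt_iff //.
Qed.

Lemma pval_sym (F : R -> R) (b : bool) : (forall x, F (- x) = 1 - F x) ->
  forall x, pval b F (- x) = 1 - pval b F x.
Proof. by move=> hF x; case: b; rewrite /pval hF // opprB addrC subrK. Qed.

Lemma mpval (F : R -> R) (b : bool) : continuous F -> measurable_fun setT (pval b F : mR -> mR).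
Proof.
move=> cF; have mF : measurable_fun setT (F : mR -> mR) by exact: measurable_realfun.continuous_measurable_fun.
case: b; rewrite /pval //.
by apply: measurable_funB => //; exact: measurable_cst.
Qed.
End PV.

Lemma half_twice (R : realType) (x : \bar R) : x = ((2^-1)%:E * (x + x))%E.
Proof.
case: x => [r| |].
- by rewrite -EFinD -EFinM; congr EFin; lra.
- by rewrite /= mulry gtr0_sg ?invr_gt0 // mul1e.
- by rewrite /= mulrNy gtr0_sg ?invr_gt0 // mul1e.
Qed.

Section SYM.
Context d (T : measurableType d) (R : realType) (P : probability T R).
Local Notation mR := (measurableTypeR R).

Lemma symmetrize (Y : T -> mR * mR) (f : mR * mR -> R) : is_pdf2 P Y f ->
  (forall A, measurable A -> P (Y @^-1` (refl2 @^-1` A)) = P (Y @^-1` A)) ->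
  exists f', is_pdf2 P Y f' /\ centrally_symmetric f'.
Proof.
move=> [f0 mf H] hY.
have mfr : measurable_fun setT (f \o refl2) by apply: measurableT_comp mf mrefl2.
exists (fun p => 2^-1 * (f p + f (refl2 p))); split; last first.
  by move=> p1 p2; rewrite /refl2 /= !subKr addrC.
split.
- by move=> v; apply: mulr_ge0; [rewrite invr_ge0|apply: addr_ge0].
- apply: measurable_funM; first exact: measurable_cst.
  exact: measurable_funD.
move=> A mA.
have mrA : measurable (refl2 @^-1` A).
  by rewrite -[X in measurable X]setTI; exact: mrefl2.
under eq_integral do rewrite EFinM.
rewrite ge0_integralZl //; last 2 first.
- by apply/measurable_EFinP; apply: measurable_funD; [exact: measurable_funS mf|exact: measurable_funS mfr].
- by move=> x _; rewrite lee_fin; apply: addr_ge0.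
under eq_integral do rewrite EFinD.
rewrite ge0_integralD //; last 4 first.
- by move=> x _; rewrite lee_fin.
- by apply/measurable_EFinP; exact: measurable_funS mf.
- by move=> x _; rewrite lee_fin.
- by apply/measurable_EFinP; exact: measurable_funS mfr.
rewrite -(@int_refl2 R f f0 mf A mA) -(H _ mA) -(H _ mrA) hY //.
by rewrite -half_twice.
Qed.
End SYM.

Definition mkmf d d' (T : measurableType d) (U : measurableType d') (f : T -> U)
  (mf : measurable_fun setT f) : {mfun T >-> U} :=
  HB.pack f (isMeasurableFun.Build _ _ _ _ f mf).
Arguments mkmf {d d' T U f}.

Theorem proposition3 (d : measure_display) (T : measurableType d) (R : realType)
  (P : probability T R) (X1 X2 eta : {RV P >-> R}) (left_sided : bool) :
  let F1 := rcdf X1 in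
  let F2 := rcdf X2 in
  let X1t := fun t => X1 t + eta t in
  let p1 := fun t => pval left_sided F1 (X1 t) in
  let p2 := fun t => pval left_sided F2 (X2 t) in
  let p1t := fun t => pval left_sided F1 (X1t t) in
  continuous F1 -> {homo F1 : x y / x < y} ->
  continuous F2 -> {homo F2 : x y / x < y} ->
  indep_RV_pair P eta (fun t => (X1 t, X2 t)) ->
  (exists g, is_pdf1 P X1 g /\ symmetric0 g) ->
  (exists h, is_pdf1 P eta h /\ symmetric0 h) ->
  (exists f0, is_pdf2 P (fun t => (p1 t, p2 t)) f0 /\ centrally_symmetric f0) ->
  (exists f, is_pdf2 P (fun t => (p1t t, p2 t)) f) ->
  exists f, is_pdf2 P (fun t => (p1t t, p2 t)) f /\ centrally_symmetric f.
Proof.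
move=> F1 F2 X1t p1 p2 p1t cF1 hF1 cF2 hF2 hind [g [pg sg]] [h [ph sh]] [f0 [pf0 sf0]] [f pf].
pose mR := measurableTypeR R.
pose pv1 := pval left_sided F1.
pose pv2 := pval left_sided F2.
have F1s : forall x, F1 (- x) = 1 - F1 x := @cdf_sym d T R P X1 g pg sg.
have pv1s : forall x, pv1 (- x) = 1 - pv1 x := @pval_sym R F1 left_sided F1s.
have mpv1 : measurable_fun setT (pv1 : mR -> mR) := @mpval R F1 left_sided cF1.
have mpv2 : measurable_fun setT (pv2 : mR -> mR) := @mpval R F2 left_sided cF2.
have mX1 : measurable_fun setT (X1 : T -> mR) := measurable_funPT X1.
have mX2 : measurable_fun setT (X2 : T -> mR) := measurable_funPT X2.
have meta : measurable_fun setT (eta : T -> mR) := measurable_funPT eta.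
pose W := fun t => ((X1 t : mR), (p2 t : mR)).
have mW : measurable_fun setT W.
  by apply: measurable_fun_pair => //; exact: measurableT_comp mpv2 mX2.
pose psi2 := fun w : mR * mR => (((- w.1 : mR), (1 - w.2 : mR)) : mR * mR).
have mpsi2 : measurable_fun setT psi2.
  apply: measurable_fun_pair.
  - by apply: measurableT_comp; [exact: measurable_realfun.oppr_measurable|exact: measurable_fst].
  - exact: measurableT_comp mrefl1 measurable_snd.
have hW : forall S, measurable S -> P (W @^-1` (psi2 @^-1` S)) = P (W @^-1` S).
  move=> S mS.
  have [V mV hV] := @pre_prod R pv1 (@hJ_pval R F1 left_sided hF1) S mS.
  have E1 : W @^-1` (psi2 @^-1` S) = (fun t => ((p1 t : mR), (p2 t : mR))) @^-1` (refl2 @^-1` V).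
    rewrite -hV; apply/seteqP; split => t /=; rewrite /pii /refl2 /psi2 /= /p1 pv1s; tauto.
  have E2 : W @^-1` S = (fun t => ((p1 t : mR), (p2 t : mR))) @^-1` V.
    rewrite -hV; apply/seteqP; split => t /=; rewrite /pii /=; tauto.
  rewrite E1 E2; exact: (@sym_law2 d T R P _ f0 pf0 sf0 V mV).
pose G2 := fun y : mR * mR => (y.1, pv2 y.2).
have mG2 : measurable_fun setT G2.
  by apply: measurable_fun_pair => //; exact: measurableT_comp mpv2 measurable_snd.
have hind2 : forall (A : set mR) (S : set (mR * mR)), measurable A -> measurable S ->
    P (eta @^-1` A `&` W @^-1` S) = (P (eta @^-1` A) * P (W @^-1` S))%E.
  move=> A S mA mS.
  have -> : W @^-1` S = (fun t => (X1 t, X2 t)) @^-1` (G2 @^-1` S) by [].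
  apply: hind => //.
  by rewrite -[X in measurable X]setTI; exact: mG2.
pose Z := fun t => ((eta t : mR), W t).
have mZ : measurable_fun setT Z by exact: measurable_fun_pair.
pose psi := fun z : mR * (mR * mR) => (((- z.1 : mR), psi2 z.2) : mR * (mR * mR)).
have mpsi : measurable_fun setT psi.
  apply: measurable_fun_pair.
  - by apply: measurableT_comp; [exact: measurable_realfun.oppr_measurable|exact: measurable_fst].
  - exact: measurableT_comp mpsi2 measurable_snd.
have mZpsi : measurable_fun setT (psi \o Z) by exact: measurableT_comp mpsi mZ.
pose Wm := mkmf mW.
pose etam := mkmf meta.
pose m1 := distribution P etam.
pose m2 := distribution P Wm.
have hprod1 : forall C, measurable C -> (m1 \x m2)%E C = pfm P mZ C.
  apply: product_measure_unique => A S mA mS.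
  rewrite pfmE.
  have -> : Z @^-1` (A `*` S) = eta @^-1` A `&` W @^-1` S by [].
  exact: hind2.
have hprod2 : forall C, measurable C -> (m1 \x m2)%E C = pfm P mZpsi C.
  apply: product_measure_unique => A S mA mS.
  rewrite pfmE.
  have -> : (psi \o Z) @^-1` (A `*` S) = eta @^-1` (-%R @^-1` A) `&` W @^-1` (psi2 @^-1` S) by [].
  have mNA : measurable (-%R @^-1` A : set mR).
    by rewrite -[X in measurable X]setTI; exact: measurable_realfun.oppr_measurable.
  have mpS : measurable (psi2 @^-1` S).
    by rewrite -[X in measurable X]setTI; exact: mpsi2.
  apply: (etrans (hind2 _ _ mNA mpS)); rewrite (hW _ mS).
  congr (_ * _)%E.
  exact: (@sym_law1 d T R P eta h ph sh A mA).
have hZ : forall C, measurable C -> P (Z @^-1` (psi @^-1` C)) = P (Z @^-1` C).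
  move=> C mC; have h1 := hprod1 C mC; have h2 := hprod2 C mC.
  rewrite pfmE in h1; rewrite pfmE in h2.
  exact: (etrans (esym h2) h1).
pose Phi := fun z : mR * (mR * mR) => (((pv1 (z.2.1 + z.1) : mR), z.2.2) : mR * mR).
have mPhi : measurable_fun setT Phi.
  apply: measurable_fun_pair.
  - apply: measurableT_comp mpv1 _.
    apply: measurable_funD.
    + exact: measurableT_comp measurable_fst measurable_snd.
    + exact: measurable_fst.
  - exact: measurableT_comp measurable_snd measurable_snd.
apply: (@symmetrize d T R P _ f pf) => A mA.
have mPA : measurable (Phi @^-1` A).
  by rewrite -[X in measurable X]setTI; exact: mPhi.
have -> : (fun t => (p1t t, p2 t)) @^-1` (refl2 @^-1` A) = Z @^-1` (psi @^-1` (Phi @^-1` A)).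
  apply/seteqP; split => t /=; rewrite /Phi /psi /psi2 /refl2 /p1t /X1t /= -opprD pv1s //.
by rewrite hZ.
Qed.
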